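(* Let $n\ge 2$ and $y=(y_1,\dots,y_{n-1},q)\in\mathbb C^n$. The following are equivalent (in each condition, ''for all $j$'' means for all $j=1,\dots,[n/2]$): (1) $y\in\widetilde{\mathbb G}_n$; (2) $\binom{n}{j}-y_jz-y_{n-j}w+\binom{n}{j}qzw\neq 0$ for all $z,w\in\overline{\mathbb D}$ and all $j$; (3) for all $j$: $\|\Phi_j(\cdot,y)\|_{H^\infty}<1$, and if $y_jy_{n-j}=\binom{n}{j}^2q$ then in addition $|y_{n-j}|<\binom{n}{j}$; (3') for all $j$: $\|\Phi_{n-j}(\cdot,y)\|_{H^\infty}<1$, and if $y_jy_{n-j}=\binom{n}{j}^2q$ then in addition $|y_j|<\binom{n}{j}$; (4) for all $j$: $\binom{n}{j}|y_j-\bar y_{n-j}q|+|y_jy_{n-j}-\binom{n}{j}^2q|<\binom{n}{j}^2-|y_{n-j}|^2$; (4') for all $j$: $\binom{n}{j}|y_{n-j}-\bar y_{j}q|+|y_jy_{n-j}-\binom{n}{j}^2q|<\binom{n}{j}^2-|y_{j}|^2$; (5) for all $j$: $|y_j|^2-|y_{n-j}|^2+\binom{n}{j}^2|q|^2+2\binom{n}{j}|y_{n-j}-\bar y_jq|<\binom{n}{j}^2$ and $|y_{n-j}|<\binom{n}{j}$; (5') for all $j$: $|y_{n-j}|^2-|y_{j}|^2+\binom{n}{j}^2|q|^2+2\binom{n}{j}|y_{j}-\bar y_{n-j}q|<\binom{n}{j}^2$ and $|y_{j}|<\binom{n}{j}$; (6) $|q|<1$ and $|y_j|^2+|y_{n-j}|^2-\binom{n}{j}^2|q|^2+2|y_jy_{n-j}-\binom{n}{j}^2q|<\binom{n}{j}^2$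 for all $j$; (7) $|y_{n-j}-\bar y_jq|+|y_j-\bar y_{n-j}q|<\binom{n}{j}(1-|q|^2)$ for all $j$; (8) there exist $2\times 2$ complex matrices $B_1,\dots,B_{[n/2]}$ with $\|B_j\|<1$, $y_j=\binom{n}{j}[B_j]_{11}$, $y_{n-j}=\binom{n}{j}[B_j]_{22}$ for all $j$, and $\det B_1=\dots=\det B_{[n/2]}=q$; (9) the same as (8) with the $B_j$ additionally symmetric matrices.
   Context: $\mathbb D$ is the open unit disc, $[x]$ the integer part, $\|\cdot\|$ the operator norm. $\widetilde{\mathbb G}_n=\{(y_1,\dots,y_{n-1},q)\in\mathbb C^n: q\in\mathbb D,\ y_j=\beta_j+\bar\beta_{n-j}q$ for some $\beta_j\in\mathbb C$ with $|\beta_j|+|\beta_{n-j}|<\binom{n}{j}$, $j=1,\dots,n-1\}$. For $z\in\mathbb C$, $y=(y_1,\dots,y_{n-1},q)\in\mathbb C^n$ and $j\in\{1,\dots,n-1\}$, define $\Phi_j(z,y)=\dfrac{\binom{n}{j}qz-y_j}{y_{n-j}z-\binom{n}{j}}$ if $y_{n-j}z\ne\binom{n}{j}$ and $y_jy_{n-j}\neq\binom{n}{j}^2q$, and $\Phi_j(z,y)=y_j/\binom{n}{j}$ if $y_jy_{n-j}=\binom{n}{j}^2q$. Set $\|\Phi_j(\cdot,y)\|_{H^\infty}=\sup_{z\in\mathbb D}|\Phi_j(z,y)|$, understood as $+\infty$ if $\Phi_j(\cdot,y)$ is undefined somewhere on $\mathbb D$ or unbounded there. *)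

(* Defs.v *)
From HB Require Import structures.
From mathcomp Require Import all_boot all_order all_algebra.
From mathcomp Require Import complex.
From mathcomp Require Import boolp classical_sets reals constructive_ereal ereal.
Set Implicit Arguments. Unset Strict Implicit. Unset Printing Implicit Defensive.
Import Order.TTheory GRing.Theory Num.Theory.
Local Open Scope ring_scope.
Local Open Scope classical_set_scope.

Section Defs.
Variable R : realType.
Local Notation C := R[i].

Definition cmod (z : C) : R := ComplexField.Normc.normc z.

Definition cconj (z : C) : C := conjc z.

Definition cbin (n j : nat) : C := ('C(n, j))%:R.

Definition rbin (n j : nat) : R := ('C(n, j))%:R.

(** The domain tilde G_n. A point y = (y_1,...,y_(n-1), q) of C^n is
    encoded by a sequence y : nat -> C (only y 1, ..., y (n-1) are relevant)
    and the last coordinate q : C. *)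
Definition tildeG (n : nat) (y : nat -> C) (q : C) : Prop :=
  cmod q < 1 /\
  exists beta : nat -> C, forall j : nat, (1 <= j <= n.-1)%N ->
    y j = beta j + cconj (beta (n - j)%N) * q /\
    cmod (beta j) + cmod (beta (n - j)%N) < ('C(n, j))%:R.

Definition Phi (n j : nat) (y : nat -> C) (q : C) (z : C) : option C :=
  if y j * y (n - j)%N == cbin n j ^+ 2 * q then Some (y j / cbin n j)
  else if y (n - j)%N * z != cbin n j
       then Some ((cbin n j * q * z - y j) / (y (n - j)%N * z - cbin n j))
       else None.

Definition PhiHinf (n j : nat) (y : nat -> C) (q : C) : \bar R :=
  if `[< exists2 z : C, cmod z < 1 & Phi n j y q z = None >] then +oo%E
  else ereal_sup [set (cmod (odflt 0 (Phi n j y q z)))%:E | z in [set z : C | cmod z < 1]].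

Definition vnorm2 (v : 'cV[C]_2) : R :=
  Num.sqrt (cmod (v ord0 ord0) ^+ 2 + cmod (v (lift ord0 ord0) ord0) ^+ 2).

Definition opnorm2 (B : 'M[C]_2) : R :=
  sup [set vnorm2 (B *m v) | v in [set v : 'cV[C]_2 | vnorm2 v = 1]].

End Defs.

(* Main.v *)
Require Import Defs.
From HB Require Import structures.
From mathcomp Require Import all_boot all_order all_algebra.
From mathcomp Require Import complex.
From mathcomp Require Import boolp classical_sets reals constructive_ereal ereal.
From mathcomp Require Import ring lra zify.
Import Order.TTheory GRing.Theory Num.Theory.
Set Implicit Arguments. Unset Strict Implicit.
Local Open Scope ring_scope.

Notation Rp := complex.Re.
Notation Ip := complex.Im.
Notation cR c := ((c)%:C)%C.

Lemma sqsum_ge0 (R : realType) (a b : R) : 0 <= a ^+ 2 + b ^+ 2.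
Proof. by rewrite addr_ge0 // sqr_ge0. Qed.

Lemma cmod2 (R : realType) (z : R[i]) : cmod z ^+ 2 = Rp z ^+ 2 + Ip z ^+ 2.
Proof. by case: z => a b; rewrite /cmod /= sqr_sqrtr // sqsum_ge0. Qed.

Lemma cmod_ge0 (R : realType) (z : R[i]) : 0 <= cmod z.
Proof. by case: z => a b; rewrite /cmod /= sqrtr_ge0. Qed.

Lemma cmodM (R : realType) (x y : R[i]) : cmod (x * y) = cmod x * cmod y.
Proof. exact: ComplexField.Normc.normcM. Qed.

Lemma cmodV (R : realType) (x : R[i]) : cmod (x^-1) = (cmod x)^-1.
Proof. exact: ComplexField.Normc.normcV. Qed.

Lemma cmod_div (R : realType) (x y : R[i]) : cmod (x / y) = cmod x / cmod y.
Proof. by rewrite cmodM cmodV. Qed.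

Lemma cmodD (R : realType) (x y : R[i]) : cmod (x + y) <= cmod x + cmod y.
Proof. exact: le_normcD. Qed.

Lemma cmodN (R : realType) (x : R[i]) : cmod (- x) = cmod x.
Proof. by case: x => a b; rewrite /cmod /= !sqrrN. Qed.

Lemma cmodB (R : realType) (x y : R[i]) : cmod (x - y) = cmod (y - x).
Proof. by rewrite -cmodN opprB. Qed.

Lemma cmod_conj (R : realType) (x : R[i]) : cmod (cconj x) = cmod x.
Proof. by case: x => a b; rewrite /cmod /cconj /= sqrrN. Qed.

Lemma cmodR (R : realType) (r : R) : cmod (cR r) = `|r|.
Proof. by rewrite /cmod /= expr0n /= addr0 sqrtr_sqr. Qed.

Lemma cmod_eq0 (R : realType) (x : R[i]) : (cmod x == 0) = (x == 0).
Proof.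
apply/idP/idP => [/eqP/ComplexField.Normc.eq0_normc -> //|/eqP ->].
by rewrite /cmod /= expr0n /= addr0 sqrtr0.
Qed.

Lemma cmod_gt0 (R : realType) (x : R[i]) : x != 0 -> 0 < cmod x.
Proof. by move=> hx; rewrite lt_def cmod_eq0 hx cmod_ge0. Qed.

Lemma Rp_le (R : realType) (x : R[i]) : Rp x <= cmod x.
Proof.
case: x => a b; rewrite /cmod /=.
apply: (le_trans (real_ler_norm _)); first exact: num_real.
rewrite -sqrtr_sqr; apply: ler_wsqrtr; have := sqr_ge0 b; lra.
Qed.

Lemma mul_conj (R : realType) (x : R[i]) : x * cconj x = cR (cmod x ^+ 2).
Proof. rewrite cmod2; case: x => a b /=; apply/eqP; rewrite eq_complex /=; apply/andP; split; apply/eqP; ring. Qed.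

Lemma cmod1 (R : realType) : cmod (1 : R[i]) = 1.
Proof. exact: ComplexField.Normc.normc1. Qed.

Lemma sq_lt (R : realType) (x y : R) : 0 <= x -> 0 <= y -> (x ^+ 2 < y ^+ 2) = (x < y).
Proof. by move=> hx hy; rewrite ltr_pXn2r. Qed.

Lemma sq_le (R : realType) (x y : R) : 0 <= x -> 0 <= y -> (x ^+ 2 <= y ^+ 2) = (x <= y).
Proof. by move=> hx hy; rewrite ler_pXn2r. Qed.

Lemma conjD (R : realType) (x y : R[i]) : cconj (x + y) = cconj x + cconj y.
Proof. by case: x => a b; case: y => c d; rewrite /cconj /=; apply/eqP; rewrite eq_complex /= opprD !eqxx. Qed.

Lemma conjM (R : realType) (x y : R[i]) : cconj (x * y) = cconj x * cconj y.
Proof. case: x => a b; case: y => c d; rewrite /cconj /=; apply/eqP; rewrite eq_complex /=; apply/andP; split; apply/eqP; ring. Qed.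

Lemma conjK (R : realType) (x : R[i]) : cconj (cconj x) = x.
Proof. by case: x => a b; rewrite /cconj /= opprK. Qed.

Lemma conjR (R : realType) (r : R) : cconj (cR r) = cR r.
Proof. by rewrite /cconj /= oppr0. Qed.

Definition T2 (R : realType) (c : R) (a b p : R[i]) : Prop :=
  forall z w : R[i], cmod z <= 1 -> cmod w <= 1 ->
    cR c - a * z - b * w + cR c * p * z * w != 0.
Arguments T2 {R}.

Definition T5 (R : realType) (c : R) (a b p : R[i]) : Prop :=
  cmod a ^+ 2 - cmod b ^+ 2 + c ^+ 2 * cmod p ^+ 2
  + 2 * c * cmod (b - cconj a * p) < c ^+ 2 /\ cmod b < c.
Arguments T5 {R}.

Definition T4 (R : realType) (c : R) (a b p : R[i]) : Prop :=
  c * cmod (a - cconj b * p) + cmod (a * b - cR c ^+ 2 * p) < c ^+ 2 - cmod b ^+ 2.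
Arguments T4 {R}.

Lemma T2_sym (R : realType) (c : R) (a b p : R[i]) : T2 c a b p -> T2 c b a p.
Proof.
move=> h z w hz hw.
rewrite (_ : _ - _ - _ + _ = cR c - a * w - b * z + cR c * p * w * z); first exact: h.
ring.
Qed.

Lemma cmod0 (R : realType) : cmod (0 : R[i]) = 0.
Proof. by apply/eqP; rewrite cmod_eq0. Qed.

Lemma T2_disc (R : realType) (c : R) (a b p : R[i]) : 0 < c -> T2 c a b p ->
  forall w, cmod w <= 1 -> cmod (a - cR c * p * w) < cmod (cR c - b * w).
Proof.
move=> c0 h w hw; rewrite ltNge; apply/negP => hle.
have [e0|ne0] := eqVneq (a - cR c * p * w) 0.
  move: hle; rewrite e0 cmod0 => hle.
  have e1 : cR c - b * w = 0.
    by apply/eqP; rewrite -cmod_eq0 eq_le hle cmod_ge0.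
  have h0 : cmod (0 : R[i]) <= 1 by rewrite cmod0 ler01.
  have := h 0 w h0 hw; apply/negP; rewrite negbK.
  by rewrite !mulr0 !mul0r subr0 addr0 e1.
set z := (cR c - b * w) / (a - cR c * p * w).
have hz : cmod z <= 1.
  by rewrite /z cmod_div (ler_pdivrMr _ _ (cmod_gt0 ne0)) mul1r.
have := h z w hz hw; apply/negP; rewrite negbK.
have -> : cR c - a * z - b * w + cR c * p * z * w =
  (cR c - b * w) - z * (a - cR c * p * w) by ring.
by rewrite /z divfK // subrr.
Qed.

Lemma T2_bc (R : realType) (c : R) (a b p : R[i]) : 0 < c -> T2 c a b p -> cmod b < c.
Proof.
move=> c0 h; rewrite ltNge; apply/negP => hle.
have b0 : b != 0 by rewrite -cmod_eq0; apply/negP => /eqP e; move: hle; rewrite e; lra.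
have hw : cmod (cR c / b) <= 1.
  by rewrite cmod_div cmodR (ger0_norm (ltW c0)) ler_pdivrMr ?cmod_gt0 // mul1r.
have h0 : cmod (0 : R[i]) <= 1 by rewrite cmod0 ler01.
have := h 0 _ h0 hw; apply/negP; rewrite negbK.
by rewrite !mulr0 !mul0r subr0 addr0 mulrC divfK // subrr.
Qed.

Lemma circle_id (R : realType) (c : R) (a b p z : R[i]) :
  cmod (a - cR c * p * z) ^+ 2 - cmod (cR c - b * z) ^+ 2 =
  cmod a ^+ 2 + c ^+ 2 * cmod p ^+ 2 * cmod z ^+ 2 - c ^+ 2 - cmod b ^+ 2 * cmod z ^+ 2
  + 2 * c * Rp (z * (b - cconj a * p)).
Proof.
rewrite !cmod2; case: a => a1 a2; case: b => b1 b2; case: p => p1 p2; case: z => z1 z2.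
rewrite /cconj /=. ring.
Qed.

Lemma T5_circ (R : realType) (c : R) (a b p : R[i]) : 0 < c -> T5 c a b p ->
  forall z, cmod z = 1 -> cmod (a - cR c * p * z) < cmod (cR c - b * z).
Proof.
move=> c0 [h1 h2] z hz.
rewrite -sq_lt ?cmod_ge0 // -subr_lt0 circle_id hz expr1n !mulr1.
have := Rp_le (z * (b - cconj a * p)); rewrite cmodM hz mul1r => hr.
have : 2 * c * Rp (z * (b - cconj a * p)) <= 2 * c * cmod (b - cconj a * p).
  by rewrite ler_pM2l ?mulr_gt0.
lra.
Qed.

Lemma T2_T5 (R : realType) (c : R) (a b p : R[i]) : 0 < c -> T2 c a b p -> T5 c a b p.
Proof.
move=> c0 h; split; last exact: T2_bc h.
set v := b - cconj a * p.
have [z [hz hzv]] : exists z, cmod z = 1 /\ Rp (z * v) = cmod v.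
  have [v0|v0] := eqVneq v 0.
    by exists 1; rewrite cmod1 v0 mulr0 cmod0.
  exists (cconj v / cR (cmod v)); split.
    by rewrite cmod_div cmod_conj cmodR ger0_norm ?cmod_ge0 // divff // cmod_eq0.
  rewrite mulrAC [cconj v * v]mulrC mul_conj -rmorphV ?unitfE ?cmod_eq0 //.
  rewrite -rmorphM /= expr2 mulrK // unitfE cmod_eq0 //.
have hz1 : cmod z <= 1 by rewrite hz.
have := T2_disc c0 h hz1.
rewrite -sq_lt ?cmod_ge0 // -subr_lt0 circle_id hz expr1n !mulr1 hzv.
rewrite /v; lra.
Qed.

Lemma sq_eq (R : realType) (x y : R) : 0 <= x -> 0 <= y -> x ^+ 2 = y ^+ 2 -> x = y.
Proof. by move=> hx hy e; apply/eqP; rewrite eq_le -(sq_le hx hy) -(sq_le hy hx) e lexx. Qed.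

Lemma cR_neq0 (R : realType) (r : R) : (cR r != 0) = (r != 0).
Proof. by rewrite -!cmod_eq0 cmodR normr_eq0. Qed.

Lemma align (R : realType) (N1 N2 : R[i]) :
  exists e, cmod e = 1 /\ cmod (N1 + N2 * e) = cmod N1 + cmod N2.
Proof.
have [->|n1] := eqVneq N1 0.
  by exists 1; rewrite cmod1 add0r mulr1 cmod0 add0r.
have [->|n2] := eqVneq N2 0.
  by exists 1; rewrite cmod1 mul0r addr0 cmod0 addr0.
pose k1 := cR (cmod N1); pose k2 := cR (cmod N2).
have k1n : k1 != 0 by rewrite cR_neq0 cmod_eq0.
have k2n : k2 != 0 by rewrite cR_neq0 cmod_eq0.
have hc : N2 * cconj N2 = k2 ^+ 2 by rewrite mul_conj rmorphXn.
have E : N1 + N2 * (cconj N2 * N1 / (k1 * k2)) = N1 * (k1 + k2) / k1.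
  rewrite mulrA [N2 * _]mulrA hc; field; by rewrite k1n k2n.
exists (cconj N2 * N1 / (k1 * k2)); split.
  rewrite cmod_div !cmodM cmod_conj !cmodR !ger0_norm ?cmod_ge0 //.
  by rewrite [cmod N2 * _]mulrC divff // mulf_neq0 // cmod_eq0.
rewrite E cmod_div cmodM -rmorphD !cmodR /= !ger0_norm ?addr_ge0 ?cmod_ge0 //.
by rewrite mulrC mulKf // cmod_eq0.
Qed.

Lemma key_id (R : realType) (c : R) (a b p z : R[i]) :
  (a - cR c * p * z) * (cR c ^+ 2 - b * cconj b) =
  cR c * (a - cconj b * p) * (cR c - b * z) + (a * b - cR c ^+ 2 * p) * (cR c * z - cconj b).
Proof. ring. Qed.

Lemma ez_id (R : realType) (c : R) (b e : R[i]) :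
  cmod (e * cR c + cconj b) ^+ 2 - cmod (cR c + e * b) ^+ 2 =
  (c ^+ 2 - cmod b ^+ 2) * (cmod e ^+ 2 - 1).
Proof.
rewrite !cmod2; case: b => b1 b2; case: e => e1 e2; rewrite /cconj /=; ring.
Qed.

Lemma Bc_id (R : realType) (c : R) (b : R[i]) :
  cR c ^+ 2 - b * cconj b = cR (c ^+ 2 - cmod b ^+ 2).
Proof. by rewrite mul_conj rmorphB -rmorphXn. Qed.

Lemma T5_T4 (R : realType) (c : R) (a b p : R[i]) : 0 < c -> T5 c a b p -> T4 c a b p.
Proof.
move=> c0 h5; have circ := T5_circ c0 h5; have hb := h5.2.
set N1 := cR c * (a - cconj b * p); set N2 := a * b - cR c ^+ 2 * p.
have Bc0 : 0 < c ^+ 2 - cmod b ^+ 2.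
  by rewrite subr_gt0 sq_lt ?cmod_ge0 ?ltW.
have [e [he hN]] := align N1 N2.
have dnz : cR c + e * b != 0.
  apply/negP => /eqP e0.
  have : cmod (cR c) = cmod (e * b).
    by rewrite -cmodN; congr cmod; apply/eqP; rewrite eq_sym -subr_eq0 opprK addrC e0.
  rewrite cmodR cmodM he mul1r ger0_norm ?ltW // => ecb; move: hb; rewrite ecb; lra.
set z0 := (e * cR c + cconj b) / (cR c + e * b).
have hz0 : z0 * (cR c + e * b) = e * cR c + cconj b by rewrite /z0 divfK.
have z0abs : cmod z0 = 1.
  rewrite /z0 cmod_div.
  have -> : cmod (e * cR c + cconj b) = cmod (cR c + e * b).
    apply: sq_eq; rewrite ?cmod_ge0 //; apply/eqP; rewrite -subr_eq0 ez_id he expr1n subrr mulr0 //.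
  by rewrite divff // cmod_eq0.
have E1 : (cR c - b * z0) * (cR c + e * b) = cR (c ^+ 2 - cmod b ^+ 2).
  rewrite -Bc_id.
  have -> : (cR c - b * z0) * (cR c + e * b) = cR c * (cR c + e * b) - b * (z0 * (cR c + e * b)) by ring.
  rewrite hz0; ring.
have nz1 : cR c - b * z0 != 0.
  apply/negP => /eqP e0; move: E1; rewrite e0 mul0r => /esym E.
  have := congr1 (@cmod R) E; rewrite cmodR cmod0 ger0_norm ?ltW //; lra.
have E2 : cR c * z0 - cconj b = e * (cR c - b * z0).
  apply: (mulIf dnz).
  have -> : (cR c * z0 - cconj b) * (cR c + e * b) = cR c * (z0 * (cR c + e * b)) - cconj b * (cR c + e * b) by ring.
  rewrite hz0 -[e * _ * _]mulrA E1 -Bc_id; ring.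
have K := key_id c a b p z0.
rewrite E2 Bc_id -/N1 -/N2 in K.
have K' : (a - cR c * p * z0) * cR (c ^+ 2 - cmod b ^+ 2) = (cR c - b * z0) * (N1 + N2 * e).
  rewrite K; ring.
have := congr1 (@cmod R) K'; rewrite !cmodM hN cmodR ger0_norm ?ltW // => K''.
have := circ z0 z0abs => hlt.
have hpos : 0 < cmod (cR c - b * z0) by rewrite cmod_gt0.
have : cmod (cR c - b * z0) * (cmod N1 + cmod N2) < cmod (cR c - b * z0) * (c ^+ 2 - cmod b ^+ 2).
  by rewrite -K'' ltr_pM2r.
rewrite ltr_pM2l // /N1 cmodM cmodR ger0_norm ?ltW //.
Qed.

Definition PhiT (R : realType) (c : R) (a b p z : R[i]) : option R[i] :=
  if a * b == cR c ^+ 2 * p then Some (a / cR c)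
  else if b * z != cR c then Some ((cR c * p * z - a) / (b * z - cR c)) else None.

Definition PH (R : realType) (c : R) (a b p : R[i]) : \bar R :=
  if `[< exists2 z : R[i], cmod z < 1 & PhiT c a b p z = None >] then +oo%E
  else ereal_sup [set (cmod (odflt 0 (PhiT c a b p z)))%:E | z in [set z : R[i] | cmod z < 1]].

Definition T3 (R : realType) (c : R) (a b p : R[i]) : Prop :=
  (PH c a b p < 1%:E)%E /\ (a * b = cR c ^+ 2 * p -> cmod b < c).

Lemma PH_ub (R : realType) (c : R) (a b p : R[i]) :
  (forall z, cmod z < 1 -> PhiT c a b p z != None) ->
  forall z, cmod z < 1 -> ((cmod (odflt 0 (PhiT c a b p z)))%:E <= PH c a b p)%E.
Proof.
move=> hn z hz; rewrite /PH; case: asboolP => [[z0 h1 h2]|_].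
  by move: (hn z0 h1); rewrite h2.
by apply: ereal_sup_ubound; exists z.
Qed.

Lemma PH_le (R : realType) (c : R) (a b p : R[i]) (M : R) :
  (forall z, cmod z < 1 -> PhiT c a b p z != None) ->
  (forall z, cmod z < 1 -> cmod (odflt 0 (PhiT c a b p z)) <= M) ->
  (PH c a b p <= M%:E)%E.
Proof.
move=> hn hM; rewrite /PH; case: asboolP => [[z0 h1 h2]|_].
  by move: (hn z0 h1); rewrite h2.
by apply/ereal_supP => y [z hz <-]; rewrite lee_fin; apply: hM.
Qed.

Lemma PH_none (R : realType) (c : R) (a b p : R[i]) :
  (PH c a b p < 1%:E)%E -> forall z, cmod z < 1 -> PhiT c a b p z != None.
Proof.
rewrite /PH; case: asboolP => [_|hn]; first by rewrite ltNge leey.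
move=> _ z hz; apply/negP => /eqP e; apply: hn; by exists z.
Qed.

Lemma disc_id (R : realType) (c : R) (b z : R[i]) :
  cmod (cR c - b * z) ^+ 2 - cmod (cR c * z - cconj b) ^+ 2 =
  (c ^+ 2 - cmod b ^+ 2) * (1 - cmod z ^+ 2).
Proof. rewrite !cmod2; case: b => b1 b2; case: z => z1 z2; rewrite /cconj /=; ring. Qed.

Lemma disc_aut (R : realType) (c : R) (b z : R[i]) : cmod z <= 1 -> cmod b <= c ->
  cmod (cR c * z - cconj b) <= cmod (cR c - b * z).
Proof.
move=> hz hb; rewrite -sq_le ?cmod_ge0 // -subr_ge0 disc_id.
have := cmod_ge0 z; have := cmod_ge0 b => h1 h2.
apply: mulr_ge0; nra.
Qed.

Lemma T4_T3 (R : realType) (c : R) (a b p : R[i]) : 0 < c -> T4 c a b p -> T3 c a b p.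
Proof.
move=> c0 h4.
have hU := cmod_ge0 (a - cconj b * p); have hD := cmod_ge0 (a * b - cR c ^+ 2 * p).
have Bc0 : 0 < c ^+ 2 - cmod b ^+ 2.
  rewrite /T4 in h4; have : 0 <= c * cmod (a - cconj b * p) by rewrite mulr_ge0 // ltW.
  lra.
have hb : cmod b < c by rewrite -sq_lt ?cmod_ge0 ?ltW // -subr_gt0.
split => //.
have [deg|ndeg] := eqVneq (a * b) (cR c ^+ 2 * p).
  have ha : cmod a < c.
    have E : cR c ^+ 2 * (a - cconj b * p) = a * (cR c ^+ 2 - b * cconj b).
      have -> : cR c ^+ 2 * (a - cconj b * p) = cR c ^+ 2 * a - cconj b * (cR c ^+ 2 * p) by ring.
      rewrite -deg; ring.
    move: (congr1 (@cmod R) E); rewrite Bc_id -rmorphXn !cmodM !cmodR.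
    rewrite (ger0_norm (ltW Bc0)) (ger0_norm (sqr_ge0 c)) => E'.
    move: h4; rewrite /T4 deg subrr cmod0 addr0 => h4.
    have : c * (c * cmod (a - cconj b * p)) < c * (c ^+ 2 - cmod b ^+ 2) by rewrite ltr_pM2l.
    rewrite mulrA -expr2 E' ltr_pM2r //.
  apply: (@le_lt_trans _ _ (cmod (a / cR c))%:E).
    apply: PH_le => [z _|z _]; rewrite /PhiT deg eqxx //.
  rewrite lte_fin cmod_div cmodR ger0_norm ?ltW // ltr_pdivrMr // mul1r //.
have hn : forall z, cmod z < 1 -> b * z != cR c.
  move=> z hz; apply/negP => /eqP e.
  have := congr1 (@cmod R) e; rewrite cmodM cmodR ger0_norm ?ltW // => e'.
  have := cmod_ge0 b; have := cmod_ge0 z => h1 h2.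
  have : cmod b * cmod z <= cmod b * 1 by rewrite ler_wpM2l // ltW.
  lra.
have hn' : forall z, cmod z < 1 ->
    PhiT c a b p z = Some ((cR c * p * z - a) / (b * z - cR c)).
  by move=> z hz; rewrite /PhiT (negbTE ndeg) hn.
pose M := (c * cmod (a - cconj b * p) + cmod (a * b - cR c ^+ 2 * p)) / (c ^+ 2 - cmod b ^+ 2).
apply: (@le_lt_trans _ _ M%:E); last by rewrite lte_fin ltr_pdivrMr // mul1r.
apply: PH_le => z hz; first by rewrite hn'.
have nz : cR c - b * z != 0 by rewrite subr_eq0 eq_sym hn.
rewrite hn' //= cmod_div (cmodB _ a) (cmodB (b * z)) ler_pdivrMr ?cmod_gt0 //.
rewrite /M [X in _ <= X]mulrAC ler_pdivlMr //.
have K := congr1 (@cmod R) (key_id c a b p z).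
rewrite Bc_id cmodM cmodR (ger0_norm (ltW Bc0)) in K.
rewrite K; apply: le_trans (cmodD _ _) _.
rewrite !cmodM cmodR (ger0_norm (ltW c0)).
have hd := @disc_aut R c b z (ltW hz) (ltW hb).
have := ler_wpM2l hD hd.
lra.
Qed.

Lemma quad_lim (R : realType) (h0 h1 h2 : R) :
  (forall t, 0 <= t -> t < 1 -> h0 + h1 * t + h2 * t ^+ 2 <= 0) -> h0 + h1 + h2 <= 0.
Proof.
move=> h; rewrite leNgt; apply/negP => H.
set S := h0 + h1 + h2 in H.
set K := `|h1| + 3 * `|h2| + 1.
have n1 : h1 <= `|h1| by apply: ler_norm.
have n2 : h2 <= `|h2| by apply: ler_norm.
have n2' : 0 <= `|h2| by apply: normr_ge0.
have n1' : 0 <= `|h1| by apply: normr_ge0.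
have K0 : 0 < K by rewrite /K; lra.
set d := S / (S + K).
have SK : 0 < S + K by lra.
have dK : d * (S + K) = S by rewrite /d divfK // lt0r_neq0.
have d0 : 0 < d by rewrite /d divr_gt0.
have d1 : d < 1 by rewrite /d ltr_pdivrMr // mul1r; lra.
have hd2 : - (d * h2) <= `|h2|.
  have : - (d * h2) <= `|d * h2| by rewrite -normrN ler_norm.
  rewrite normrM (gtr0_norm d0) => e; apply: (le_trans e).
  by rewrite ler_piMl // ltW.
set X := h1 + 2 * h2 - d * h2.
have hX : X <= K by rewrite /X /K; lra.
have hdX : d * X <= d * K by rewrite ler_pM2l.
have hd0 : 0 <= 1 - d by lra.
have hd1 : 1 - d < 1 by lra.
have := h (1 - d) hd0 hd1.
have -> : h0 + h1 * (1 - d) + h2 * (1 - d) ^+ 2 = S - d * X by rewrite /S /X; ring.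
have dS : 0 < d * S by rewrite mulr_gt0.
have : d * K = S - d * S by rewrite -{1}dK; ring.
lra.
Qed.

Lemma lin_id (R : realType) (al be : R[i]) (t : R) :
  cmod (al - cR t * be) ^+ 2 =
  cmod al ^+ 2 - 2 * t * Rp (al * cconj be) + t ^+ 2 * cmod be ^+ 2.
Proof. rewrite !cmod2; case: al => a1 a2; case: be => b1 b2; rewrite /cconj /=; ring. Qed.

Lemma ext_bound (R : realType) (al be ga de : R[i]) (M : R) : 0 <= M ->
  (forall t, 0 <= t -> t < 1 -> cmod (al - cR t * be) <= M * cmod (ga - cR t * de)) ->
  cmod (al - be) <= M * cmod (ga - de).
Proof.
move=> M0 h.
have H : forall t, 0 <= t -> t < 1 ->
    cmod (al - cR t * be) ^+ 2 <= M ^+ 2 * cmod (ga - cR t * de) ^+ 2.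
  move=> t t0 t1; have hh := h t t0 t1.
  rewrite -exprMn sq_le; [exact hh | exact: cmod_ge0 | by rewrite mulr_ge0 // cmod_ge0].
have H1 : forall t, 0 <= t -> t < 1 ->
    cmod al ^+ 2 - M ^+ 2 * cmod ga ^+ 2 +
    (- 2 * Rp (al * cconj be) + M ^+ 2 * 2 * Rp (ga * cconj de)) * t +
    (cmod be ^+ 2 - M ^+ 2 * cmod de ^+ 2) * t ^+ 2 <= 0.
  move=> t t0 t1; have := H t t0 t1; rewrite !lin_id => e.
  have -> : cmod al ^+ 2 - M ^+ 2 * cmod ga ^+ 2 +
    (- 2 * Rp (al * cconj be) + M ^+ 2 * 2 * Rp (ga * cconj de)) * t +
    (cmod be ^+ 2 - M ^+ 2 * cmod de ^+ 2) * t ^+ 2 =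
    (cmod al ^+ 2 - 2 * t * Rp (al * cconj be) + t ^+ 2 * cmod be ^+ 2) -
    M ^+ 2 * (cmod ga ^+ 2 - 2 * t * Rp (ga * cconj de) + t ^+ 2 * cmod de ^+ 2) by ring.
  by rewrite subr_le0.
have h2 := quad_lim H1.
have e1 : al - be = al - cR 1 * be by rewrite rmorph1 mul1r.
have e2 : ga - de = ga - cR 1 * de by rewrite rmorph1 mul1r.
have HH : cmod (al - be) ^+ 2 <= M ^+ 2 * cmod (ga - de) ^+ 2.
  rewrite e1 e2 !lin_id expr1n !mulr1 !mul1r.
  move: h2; lra.
rewrite -exprMn in HH.
by rewrite -(sq_le (cmod_ge0 _) (mulr_ge0 M0 (cmod_ge0 _))).
Qed.

Lemma T3_T2 (R : realType) (c : R) (a b p : R[i]) : 0 < c -> T3 c a b p -> T2 c a b p.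
Proof.
move=> c0 [hPH hdeg] z w hz hw.
have hn := PH_none hPH.
have hub := PH_ub hn.
have z00 : cmod (0 : R[i]) < 1 by rewrite cmod0 ltr01.
have [deg|ndeg] := eqVneq (a * b) (cR c ^+ 2 * p).
  have hb := hdeg deg.
  have := le_lt_trans (hub 0 z00) hPH.
  rewrite /PhiT deg eqxx /= lte_fin cmod_div cmodR (ger0_norm (ltW c0)) ltr_pdivrMr // mul1r => ha.
  apply/negP => /eqP E.
  have E2 : (cR c - a * z) * (cR c - b * w) = 0.
    have -> : (cR c - a * z) * (cR c - b * w) =
      cR c * (cR c - a * z - b * w + cR c * p * z * w) + (a * b - cR c ^+ 2 * p) * z * w by ring.
    by rewrite E deg subrr !mul0r mulr0 addr0.
  have := cmod_ge0 z; have := cmod_ge0 a; have := cmod_ge0 w; have := cmod_ge0 b => g1 g2 g3 g4.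
  move/eqP: E2; rewrite mulf_eq0 => /orP[] /eqP e.
    have : cmod (cR c) = cmod (a * z) by rewrite -[cR c](subrK (a * z)) e add0r.
    rewrite cmodR cmodM (ger0_norm (ltW c0)) => e'; nra.
  have : cmod (cR c) = cmod (b * w) by rewrite -[cR c](subrK (b * w)) e add0r.
  rewrite cmodR cmodM (ger0_norm (ltW c0)) => e'; nra.
have [M [M1 HM]] : exists M : R, M < 1 /\
    forall z, cmod z < 1 -> cmod (odflt 0 (PhiT c a b p z)) <= M.
  move: hub hPH; case: (PH c a b p) => [r| |] hub' hPH'.
  - exists r; split; first by rewrite -lte_fin.
    by move=> z' hz'; rewrite -lee_fin hub'.
  - by move: hPH'; rewrite ltNge leey.
  - by have := hub' 0 z00; rewrite leNgt ltNyr.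
have M0 : 0 <= M by apply: le_trans (HM 0 z00); exact: cmod_ge0.
have Hs : forall z, cmod z < 1 ->
    PhiT c a b p z = Some ((cR c * p * z - a) / (b * z - cR c)) /\ b * z != cR c.
  move=> z' hz'; have := hn z' hz'; rewrite /PhiT (negbTE ndeg).
  by case: ifP => [hbz _|_ /eqP //].
have H1 : forall z, cmod z < 1 -> cmod (a - cR c * p * z) <= M * cmod (cR c - b * z).
  move=> z' hz'; have [e1 e2] := Hs z' hz'.
  have hpos : 0 < cmod (cR c - b * z') by rewrite cmod_gt0 // subr_eq0 eq_sym.
  have := HM z' hz'; rewrite e1 /= cmod_div (cmodB _ a) (cmodB (b * z')).
  by rewrite (ler_pdivrMr _ _ hpos) mulrC.
have H2 : forall w, cmod w <= 1 -> cmod (a - cR c * p * w) <= M * cmod (cR c - b * w).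
  move=> w' hw'.
  have [lt1|eq1] : cmod w' < 1 \/ cmod w' = 1.
    by move: hw'; rewrite le_eqVlt => /orP[/eqP ->|->]; [right|left].
    exact: H1.
  apply: (@ext_bound R a (cR c * p * w') (cR c) (b * w') M M0).
  move=> t t0 t1.
  have ht : cmod (cR t * w') < 1 by rewrite cmodM cmodR eq1 mulr1 ger0_norm.
  have := H1 _ ht.
  have -> : a - cR c * p * (cR t * w') = a - cR t * (cR c * p * w') by ring.
  by have -> : cR c - b * (cR t * w') = cR c - cR t * (b * w') by ring.
apply/negP => /eqP E.
have E' : cR c - b * w = z * (a - cR c * p * w).
  apply/eqP; rewrite -subr_eq0 -E; apply/eqP; ring.
have hw2 := H2 w hw.
have hXY : cmod (cR c - b * w) <= cmod (a - cR c * p * w).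
  by rewrite E' cmodM ler_piMl // cmod_ge0.
have gY := cmod_ge0 (cR c - b * w).
have Y0 : cmod (cR c - b * w) = 0 by nra.
have X0 : cmod (a - cR c * p * w) = 0 by move: hw2; rewrite Y0 mulr0; have := cmod_ge0 (a - cR c * p * w); lra.
move/eqP: Y0; rewrite cmod_eq0 subr_eq0 => /eqP Y0.
move/eqP: X0; rewrite cmod_eq0 subr_eq0 => /eqP X0.
move: ndeg; rewrite X0.
have -> : cR c * p * w * b = cR c * p * (b * w) by ring.
rewrite -Y0.
have -> : cR c * p * cR c = cR c ^+ 2 * p by ring.
by rewrite eqxx.
Qed.

Definition T7 (R : realType) (c : R) (a b p : R[i]) : Prop :=
  cmod (b - cconj a * p) + cmod (a - cconj b * p) < c * (1 - cmod p ^+ 2).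

Definition T1 (R : realType) (c : R) (a b p : R[i]) : Prop :=
  cmod p < 1 /\ exists b1 b2 : R[i],
    [/\ a = b1 + cconj b2 * p, b = b2 + cconj b1 * p & cmod b1 + cmod b2 < c].

Definition T6 (R : realType) (c : R) (a b p : R[i]) : Prop :=
  cmod p < 1 /\
  cmod a ^+ 2 + cmod b ^+ 2 - c ^+ 2 * cmod p ^+ 2 + 2 * cmod (a * b - cR c ^+ 2 * p) < c ^+ 2.

Lemma lt1_sq (R : realType) (x : R) : 0 <= x -> (x ^+ 2 < 1) = (x < 1).
Proof. by move=> hx; rewrite -{1}(expr1n R 2%N) sq_lt. Qed.

Lemma le1_sq (R : realType) (x : R) : 0 <= x -> (x ^+ 2 <= 1) = (x <= 1).
Proof. by move=> hx; rewrite -{1}(expr1n R 2%N) sq_le. Qed.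

Lemma T5T5_T7 (R : realType) (c : R) (a b p : R[i]) : 0 < c ->
  T5 c a b p -> T5 c b a p -> T7 c a b p.
Proof.
move=> c0 [h1 _] [h2 _]; rewrite /T7.
have : c * (cmod (b - cconj a * p) + cmod (a - cconj b * p)) < c * (c * (1 - cmod p ^+ 2)).
  move: h1 h2; lra.
by rewrite ltr_pM2l.
Qed.

Lemma T7_p (R : realType) (c : R) (a b p : R[i]) : 0 < c -> T7 c a b p -> cmod p < 1.
Proof.
move=> c0 h; have g1 := cmod_ge0 (b - cconj a * p); have g2 := cmod_ge0 (a - cconj b * p).
have : 0 < c * (1 - cmod p ^+ 2) by move: h; rewrite /T7; lra.
by rewrite pmulr_rgt0 // subr_gt0 lt1_sq // cmod_ge0.
Qed.

Lemma conj_p (R : realType) (p : R[i]) : cconj p * p = cR (cmod p ^+ 2).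
Proof. by rewrite mulrC mul_conj. Qed.

Lemma cmod_1sub (R : realType) (p : R[i]) : cmod p < 1 ->
  cmod (1 - cconj p * p) = 1 - cmod p ^+ 2.
Proof.
move=> hp; rewrite conj_p -(rmorph1 (real_complex R)) -rmorphB cmodR ger0_norm //.
by rewrite subr_ge0 le1_sq ?cmod_ge0 ?ltW.
Qed.

Lemma T1_T7 (R : realType) (c : R) (a b p : R[i]) : 0 < c -> T1 c a b p -> T7 c a b p.
Proof.
move=> c0 [hp [b1 [b2 [ea eb hs]]]].
have e1 : a - cconj b * p = b1 * (1 - cconj p * p).
  by rewrite ea eb conjD conjM conjK; ring.
have e2 : b - cconj a * p = b2 * (1 - cconj p * p).
  by rewrite ea eb conjD conjM conjK; ring.
rewrite /T7 e1 e2 !cmodM cmod_1sub //.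
have : 0 < 1 - cmod p ^+ 2 by rewrite subr_gt0 lt1_sq // cmod_ge0.
move=> g; rewrite -mulrDl ltr_pM2r //; lra.
Qed.

Lemma conjN (R : realType) (x : R[i]) : cconj (- x) = - cconj x.
Proof. by case: x => a b; rewrite /cconj /=. Qed.

Lemma conj_divR (R : realType) (x : R[i]) (r : R) : cconj (x / cR r) = cconj x / cR r.
Proof. by rewrite conjM -fmorphV conjR. Qed.

Lemma T7_T1 (R : realType) (c : R) (a b p : R[i]) : 0 < c -> T7 c a b p -> T1 c a b p.
Proof.
move=> c0 h; have hp := T7_p c0 h; split => //.
have g : 0 < 1 - cmod p ^+ 2 by rewrite subr_gt0 lt1_sq // cmod_ge0.
set G := 1 - cmod p ^+ 2.
have GE : cR G = 1 - cconj p * p by rewrite conj_p rmorphB rmorph1.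
have Gn : cR G != 0 by rewrite cR_neq0 lt0r_neq0.
exists ((a - cconj b * p) / cR G), ((b - cconj a * p) / cR G); split.
- rewrite conj_divR conjD conjN conjM conjK.
  apply: (mulIf Gn); rewrite GE; field; by rewrite -GE.
- rewrite conj_divR conjD conjN conjM conjK.
  apply: (mulIf Gn); rewrite GE; field; by rewrite -GE.
- rewrite !cmod_div cmodR ger0_norm ?ltW // -mulrDl ltr_pdivrMr //.
  by rewrite addrC.
Qed.

Lemma uv_id (R : realType) (a b p : R[i]) :
  cmod (a - cconj b * p) ^+ 2 - cmod (b - cconj a * p) ^+ 2 =
  (cmod a ^+ 2 - cmod b ^+ 2) * (1 - cmod p ^+ 2).
Proof.
rewrite !cmod2; case: a => a1 a2; case: b => b1 b2; case: p => p1 p2; rewrite /cconj /=; ring.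
Qed.

Lemma T7_T5 (R : realType) (c : R) (a b p : R[i]) : 0 < c -> T7 c a b p -> T5 c a b p.
Proof.
move=> c0 h7; have [hp [b1 [b2 [ea eb hs]]]] := T7_T1 c0 h7.
split; last first.
  rewrite eb; apply: le_lt_trans (cmodD _ _) _.
  rewrite cmodM cmod_conj.
  have : cmod b1 * cmod p <= cmod b1 by rewrite ler_piMr ?cmod_ge0 ?ltW.
  lra.
have g : 0 < 1 - cmod p ^+ 2 by rewrite subr_gt0 lt1_sq // cmod_ge0.
move: h7; rewrite /T7.
set u := cmod (a - cconj b * p); set v := cmod (b - cconj a * p); set G := 1 - cmod p ^+ 2.
move=> h7.
have gu : 0 <= u := cmod_ge0 _. have gv : 0 <= v := cmod_ge0 _.
have hsq : u ^+ 2 < (c * G - v) ^+ 2 by rewrite sq_lt //; lra.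
have I := uv_id a b p; rewrite -/u -/v -/G in I.
have : G * (cmod a ^+ 2 - cmod b ^+ 2 + 2 * c * v - c ^+ 2 * G) < 0.
  have -> : G * (cmod a ^+ 2 - cmod b ^+ 2 + 2 * c * v - c ^+ 2 * G) =
    u ^+ 2 - (c * G - v) ^+ 2.
    have -> : u ^+ 2 = v ^+ 2 + (cmod a ^+ 2 - cmod b ^+ 2) * G by rewrite -I; ring.
    ring.
  by rewrite subr_lt0.
rewrite pmulr_rlt0 // /G; lra.
Qed.

Lemma UD_id (R : realType) (c : R) (a b p : R[i]) :
  c ^+ 2 * cmod (a - cconj b * p) ^+ 2 - cmod (a * b - cR c ^+ 2 * p) ^+ 2 =
  (c ^+ 2 - cmod b ^+ 2) * (cmod a ^+ 2 - c ^+ 2 * cmod p ^+ 2).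
Proof.
rewrite !cmod2; case: a => a1 a2; case: b => b1 b2; case: p => p1 p2; rewrite /cconj /=; ring.
Qed.

Lemma T4_T6 (R : realType) (c : R) (a b p : R[i]) : 0 < c -> T4 c a b p -> cmod p < 1 ->
  T6 c a b p.
Proof.
move=> c0 h4 hp; split => //; move: h4; rewrite /T4.
set U := cmod (a - cconj b * p); set D := cmod (a * b - cR c ^+ 2 * p).
set B := c ^+ 2 - cmod b ^+ 2 => h4.
have gU : 0 <= U := cmod_ge0 _. have gD : 0 <= D := cmod_ge0 _.
have gcU : 0 <= c * U by rewrite mulr_ge0 // ltW.
have B0 : 0 < B by lra.
have hsq : (c * U) ^+ 2 < (B - D) ^+ 2 by rewrite sq_lt //; lra.
have I := UD_id c a b p; rewrite -/U -/D -/B in I.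
have : B * (cmod a ^+ 2 - c ^+ 2 * cmod p ^+ 2 - B + 2 * D) < 0.
  have -> : B * (cmod a ^+ 2 - c ^+ 2 * cmod p ^+ 2 - B + 2 * D) =
    (c * U) ^+ 2 - (B - D) ^+ 2.
    rewrite exprMn -[c ^+ 2 * U ^+ 2](subrK (D ^+ 2)) I; ring.
  by rewrite subr_lt0.
rewrite pmulr_rlt0 // /B; lra.
Qed.

Local Open Scope classical_set_scope.

Lemma det2 (R : comNzRingType) (B : 'M[R]_2) :
  \det B = B ord0 ord0 * B ord_max ord_max - B ord0 ord_max * B ord_max ord0.
Proof.
rewrite (expand_det_row _ ord0) !big_ord_recl big_ord0 addr0 /cofactor /=.
rewrite !det_mx11 !mxE /=.
have -> : lift ord0 (0:'I_1) = ord_max :> 'I_2 by apply/val_inj.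
have -> : lift (ord_max : 'I_2) (0:'I_1) = ord0 :> 'I_2 by apply/val_inj.
rewrite /bump /= expr0 expr1 mul1r; ring.
Qed.

Lemma lift00 : lift ord0 ord0 = ord_max :> 'I_2.
Proof. by apply/val_inj. Qed.

Lemma mulmx2 (R : comNzRingType) (B : 'M[R]_2) (v : 'cV[R]_2) (i : 'I_2) :
  (B *m v) i ord0 = B i ord0 * v ord0 ord0 + B i ord_max * v ord_max ord0.
Proof. by rewrite mxE !big_ord_recl big_ord0 addr0 lift00. Qed.

Definition mkv (R : realType) (x0 x1 : R[i]) : 'cV[R[i]]_2 :=
  \col_(i < 2) (if i == ord0 then x0 else x1).

Lemma mkv0 (R : realType) (x0 x1 : R[i]) : mkv x0 x1 ord0 ord0 = x0.
Proof. by rewrite /mkv mxE. Qed.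

Lemma mkv1 (R : realType) (x0 x1 : R[i]) : mkv x0 x1 ord_max ord0 = x1.
Proof. by rewrite /mkv mxE. Qed.

Lemma vnorm2E (R : realType) (v : 'cV[R[i]]_2) :
  vnorm2 v = Num.sqrt (cmod (v ord0 ord0) ^+ 2 + cmod (v ord_max ord0) ^+ 2).
Proof. by rewrite /vnorm2 lift00. Qed.

Definition opS (R : realType) (B : 'M[R[i]]_2) :=
  [set vnorm2 (B *m v) | v in [set v : 'cV[R[i]]_2 | vnorm2 v = 1]].

Lemma opS_ne (R : realType) (B : 'M[R[i]]_2) : opS B !=set0.
Proof.
exists (vnorm2 (B *m mkv 1 0)); exists (mkv 1 0) => //.
by rewrite /= vnorm2E mkv0 mkv1 cmod1 cmod0 expr1n expr0n /= addr0 sqrtr1.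
Qed.

Lemma sqrt_le_sum (R : realType) (x y : R) : 0 <= x -> 0 <= y ->
  Num.sqrt (x ^+ 2 + y ^+ 2) <= x + y.
Proof.
move=> hx hy; apply: (@le_trans _ _ (Num.sqrt ((x + y) ^+ 2))).
  apply: ler_wsqrtr; have := mulr_ge0 hx hy; nra.
by rewrite sqrtr_sqr ger0_norm // addr_ge0.
Qed.

Lemma unit_entries (R : realType) (v : 'cV[R[i]]_2) : vnorm2 v = 1 ->
  cmod (v ord0 ord0) ^+ 2 + cmod (v ord_max ord0) ^+ 2 = 1.
Proof.
rewrite vnorm2E => h.
by rewrite -(sqr_sqrtr (addr_ge0 (sqr_ge0 _) (sqr_ge0 _))) h expr1n.
Qed.

Lemma unit_le1 (R : realType) (v : 'cV[R[i]]_2) : vnorm2 v = 1 ->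
  cmod (v ord0 ord0) <= 1 /\ cmod (v ord_max ord0) <= 1.
Proof.
move=> /unit_entries h; have g0 := cmod_ge0 (v ord0 ord0); have g1 := cmod_ge0 (v ord_max ord0).
by split; rewrite -le1_sq //; move: h; have := sqr_ge0 (cmod (v ord0 ord0)); have := sqr_ge0 (cmod (v ord_max ord0)); lra.
Qed.

Lemma opS_ub (R : realType) (B : 'M[R[i]]_2) :
  ubound (opS B) (cmod (B ord0 ord0) + cmod (B ord0 ord_max) + (cmod (B ord_max ord0) + cmod (B ord_max ord_max))).
Proof.
move=> x [v /= hv <-]; have [h0 h1] := unit_le1 hv.
rewrite vnorm2E !mulmx2.
apply: le_trans (sqrt_le_sum (cmod_ge0 _) (cmod_ge0 _)) _.
apply: lerD; (apply: le_trans (cmodD _ _) _; rewrite !cmodM; apply: lerD;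
  [rewrite ler_piMr ?cmod_ge0 // | rewrite ler_piMr ?cmod_ge0 //]).
Qed.

Lemma opS_sup (R : realType) (B : 'M[R[i]]_2) : has_sup (opS B).
Proof. by split; [exact: opS_ne | eexists; exact: opS_ub]. Qed.

Lemma opnorm_ge (R : realType) (B : 'M[R[i]]_2) (v : 'cV[R[i]]_2) :
  vnorm2 v = 1 -> vnorm2 (B *m v) <= opnorm2 B.
Proof. by move=> hv; apply: sup_upper_bound; [exact: opS_sup | exists v]. Qed.

Lemma opnorm_le (R : realType) (B : 'M[R[i]]_2) (K : R) :
  (forall v : 'cV[R[i]]_2, vnorm2 v = 1 -> vnorm2 (B *m v) <= K) -> opnorm2 B <= K.
Proof. by move=> h; apply: ge_sup; [exact: opS_ne | move=> x [v hv <-]; exact: h]. Qed.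

Lemma norm_ge1 (R : realType) (B : 'M[R[i]]_2) (x0 x1 : R[i]) :
  (x0 != 0) || (x1 != 0) ->
  cmod x0 ^+ 2 + cmod x1 ^+ 2 <=
    cmod (B ord0 ord0 * x0 + B ord0 ord_max * x1) ^+ 2 +
    cmod (B ord_max ord0 * x0 + B ord_max ord_max * x1) ^+ 2 ->
  1 <= opnorm2 B.
Proof.
move=> hx hle.
set s := cmod x0 ^+ 2 + cmod x1 ^+ 2.
have s0 : 0 < s.
  rewrite /s; case/orP: hx => h.
    by rewrite ltr_pwDl ?sqr_ge0 // exprn_gt0 // cmod_gt0.
  by rewrite ltr_pwDr ?sqr_ge0 // exprn_gt0 // cmod_gt0.
set n := Num.sqrt s.
have n0 : 0 < n by rewrite sqrtr_gt0.
have n2 : n ^+ 2 = s by rewrite sqr_sqrtr // ltW.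
have nn : cR n != 0 by rewrite cR_neq0 lt0r_neq0.
have hu : vnorm2 (mkv (x0 / cR n) (x1 / cR n)) = 1.
  rewrite vnorm2E mkv0 mkv1 !cmod_div cmodR (ger0_norm (ltW n0)) !expr_div_n -mulrDl n2.
  by rewrite divff ?lt0r_neq0 // sqrtr1.
apply: le_trans (opnorm_ge B hu).
rewrite vnorm2E !mulmx2 mkv0 mkv1.
have e : forall al be : R[i], al * (x0 / cR n) + be * (x1 / cR n) = (al * x0 + be * x1) / cR n.
  by move=> al be; rewrite mulrDl !mulrA.
rewrite !e !cmod_div cmodR (ger0_norm (ltW n0)) !expr_div_n -mulrDl n2.
rewrite -sqrtr1; apply: ler_wsqrtr.
by rewrite ler_pdivlMr // mul1r.
Qed.

Definition T8 (R : realType) (c : R) (a b p : R[i]) : Prop :=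
  exists B : 'M[R[i]]_2, [/\ opnorm2 B < 1, a = cR c * B ord0 ord0,
    b = cR c * B ord_max ord_max & \det B = p].

Definition T9 (R : realType) (c : R) (a b p : R[i]) : Prop :=
  exists B : 'M[R[i]]_2, [/\ opnorm2 B < 1, a = cR c * B ord0 ord0,
    b = cR c * B ord_max ord_max, \det B = p & B^T = B].

Lemma T9_T8 (R : realType) (c : R) (a b p : R[i]) : T9 c a b p -> T8 c a b p.
Proof. by move=> [B [h1 h2 h3 h4 _]]; exists B. Qed.

Lemma T8_T2 (R : realType) (c : R) (a b p : R[i]) : 0 < c -> T8 c a b p -> T2 c a b p.
Proof.
move=> c0 [B [hB ea eb ed]] z w hz hw; apply/negP => /eqP E.
set al := B ord0 ord0 in ea; set be := B ord0 ord_max.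
set ga := B ord_max ord0; set de := B ord_max ord_max in eb.
have F : 1 - al * z - de * w + (al * de - be * ga) * z * w = 0.
  have cn : cR c != 0 by rewrite cR_neq0 lt0r_neq0.
  apply: (mulfI cn); rewrite mulr0 -E ea eb -ed det2 -/al -/be -/ga -/de; ring.
suff : 1 <= opnorm2 B by rewrite leNgt hB.
have gz := cmod_ge0 z; have gw := cmod_ge0 w.
have [n1|n1] := boolP ((be * w != 0) || (1 - al * z != 0)).
  have Y0 : al * (z * (be * w)) + be * (w * (1 - al * z)) = be * w by ring.
  have Y1 : ga * (z * (be * w)) + de * (w * (1 - al * z)) = 1 - al * z.
    rewrite -[RHS]subr0 -F; ring.
  apply: (@norm_ge1 _ B (z * (be * w)) (w * (1 - al * z))).
    apply: contraLR n1; rewrite negb_or !negbK => /andP[/eqP h0 /eqP h1].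
    by move: Y0 Y1; rewrite h0 h1 !mulr0 addr0 => <- <-; rewrite eqxx.
  rewrite -/al -/be -/ga -/de Y0 Y1 !cmodM !exprMn.
  have := sqr_ge0 (cmod (be * w)); have := sqr_ge0 (cmod (1 - al * z)).
  have : cmod z ^+ 2 <= 1 by rewrite le1_sq.
  have : cmod w ^+ 2 <= 1 by rewrite le1_sq.
  nra.
move: n1; rewrite negb_or !negbK => /andP[_ /eqP h1].
have az : al * z = 1 by apply/eqP; rewrite eq_sym -subr_eq0 h1.
apply: (@norm_ge1 _ B 1 0); first by rewrite oner_eq0.
rewrite -/al -/ga !mulr1 !mulr0 !addr0 cmod1 cmod0 expr1n expr0n /= addr0.
have : cmod al * cmod z = 1 by rewrite -cmodM az cmod1.
have := cmod_ge0 al; have := sqr_ge0 (cmod ga) => g1 g2 e.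
have : 1 <= cmod al by nra.
nra.
Qed.

Lemma core_real (R : realType) (h11 h22 r P X Y : R) :
  0 <= h11 -> 0 <= h22 -> 0 <= r -> 0 <= X -> 0 <= Y -> X ^+ 2 + Y ^+ 2 = 1 ->
  h11 * h22 - r ^+ 2 = P -> h11 + h22 - P < 1 -> P < 1 ->
  h11 * X ^+ 2 + h22 * Y ^+ 2 + 2 * r * X * Y <=
    1 - (1 - (h11 + h22) + P) / (2 - (h11 + h22)).
Proof.
move=> g11 g22 gr gX gY hXY hP hT hP1.
set T := h11 + h22 in hT *.
have T2 : 0 < 2 - T by lra.
set e := (1 - T + P) / (2 - T).
have he : e * (2 - T) = 1 - T + P by rewrite /e divfK // lt0r_neq0.
set P1 := 1 - e - h11; set P2 := 1 - e - h22.
have hPP : P1 * P2 - r ^+ 2 = e ^+ 2.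
  rewrite /P1 /P2; move: he hP; rewrite /T => he hP; nra.
have hP4 : 4 * P <= T ^+ 2 by rewrite -hP /T; have := sqr_ge0 (h11 - h22); have := sqr_ge0 r; nra.
have hsum : 0 <= P1 + P2.
  have : 0 <= (2 - T) * (P1 + P2).
    have -> : (2 - T) * (P1 + P2) = (2 - T) ^+ 2 - 2 * (e * (2 - T)) by rewrite /P1 /P2 /T; ring.
    rewrite he; have := sqr_ge0 (T - 2); nra.
  by rewrite pmulr_rge0.
have hprod : 0 <= P1 * P2 by have := sqr_ge0 r; have := sqr_ge0 e; lra.
have gP1 : 0 <= P1 by nra.
have gP2 : 0 <= P2 by nra.
set s1 := Num.sqrt P1; set s2 := Num.sqrt P2.
have e1 : s1 ^+ 2 = P1 by rewrite sqr_sqrtr.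
have e2 : s2 ^+ 2 = P2 by rewrite sqr_sqrtr.
have gs1 : 0 <= s1 := sqrtr_ge0 _. have gs2 : 0 <= s2 := sqrtr_ge0 _.
have hr : r <= s1 * s2.
  rewrite -sq_le ?mulr_ge0 // exprMn e1 e2; have := sqr_ge0 e; lra.
have hXY0 : 0 <= X * Y by rewrite mulr_ge0.
have : r * (X * Y) <= s1 * s2 * (X * Y) by rewrite ler_wpM2r.
have := sqr_ge0 (s1 * X - s2 * Y).
rewrite -/e.
have -> : 1 - e = (1 - e) * (X ^+ 2 + Y ^+ 2) by rewrite hXY mulr1.
move: e1 e2; rewrite /P1 /P2 => e1 e2.
nra.
Qed.

Lemma idA (R : realType) (al w de v0 v1 : R[i]) :
  cmod (al * v0 + w * v1) ^+ 2 + cmod (w * v0 + de * v1) ^+ 2 =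
  (cmod al ^+ 2 + cmod w ^+ 2) * cmod v0 ^+ 2 + (cmod w ^+ 2 + cmod de ^+ 2) * cmod v1 ^+ 2
  + 2 * Rp (cconj v0 * (cconj al * w + cconj w * de) * v1).
Proof.
rewrite !cmod2; case: al => a1 a2; case: w => w1 w2; case: de => d1 d2.
case: v0 => x1 x2; case: v1 => y1 y2; rewrite /cconj /=; ring.
Qed.

Lemma idB (R : realType) (al w de : R[i]) :
  (cmod al ^+ 2 + cmod w ^+ 2) * (cmod w ^+ 2 + cmod de ^+ 2)
  - cmod (cconj al * w + cconj w * de) ^+ 2 = cmod (al * de - w * w) ^+ 2.
Proof.
rewrite !cmod2; case: al => a1 a2; case: w => w1 w2; case: de => d1 d2; rewrite /cconj /=; ring.
Qed.

Lemma T6_T9 (R : realType) (c : R) (a b p : R[i]) : 0 < c -> T6 c a b p -> T9 c a b p.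
Proof.
move=> c0 [hp h6].
have cn : cR c != 0 by rewrite cR_neq0 lt0r_neq0.
set w := sqrtc ((a * b - cR c ^+ 2 * p) / cR c ^+ 2).
have hw2 : w * w = (a * b - cR c ^+ 2 * p) / cR c ^+ 2 by rewrite -expr2 sqr_sqrtc.
set al := a / cR c; set de := b / cR c.
pose B : 'M[R[i]]_2 :=
  \matrix_(i < 2, j < 2) (if i == j then (if i == ord0 then al else de) else w).
have B00 : B ord0 ord0 = al by rewrite mxE.
have B11 : B ord_max ord_max = de by rewrite mxE.
have B01 : B ord0 ord_max = w by rewrite mxE.
have B10 : B ord_max ord0 = w by rewrite mxE.
have hdet : al * de - w * w = p by rewrite hw2 /al /de; field; rewrite cn.
exists B; split.
- set h11 := cmod al ^+ 2 + cmod w ^+ 2; set h22 := cmod w ^+ 2 + cmod de ^+ 2.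
  set r := cmod (cconj al * w + cconj w * de); set P := cmod p ^+ 2.
  have hP : h11 * h22 - r ^+ 2 = P by rewrite /h11 /h22 /r idB hdet.
  have c2 : 0 < c ^+ 2 by rewrite exprn_gt0.
  have hT : h11 + h22 - P < 1.
    have ea : cmod al ^+ 2 = cmod a ^+ 2 / c ^+ 2.
      by rewrite /al cmod_div cmodR (ger0_norm (ltW c0)) expr_div_n.
    have ed : cmod de ^+ 2 = cmod b ^+ 2 / c ^+ 2.
      by rewrite /de cmod_div cmodR (ger0_norm (ltW c0)) expr_div_n.
    have ew : cmod w ^+ 2 = cmod (a * b - cR c ^+ 2 * p) / c ^+ 2.
      rewrite expr2 -cmodM hw2 cmod_div -rmorphXn cmodR ger0_norm //.
      exact: ltW.
    have : c ^+ 2 * (h11 + h22 - P) < c ^+ 2 * 1.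
      rewrite /h11 /h22 /P ea ed ew.
      have -> : c ^+ 2 * (cmod a ^+ 2 / c ^+ 2 + cmod (a * b - cR c ^+ 2 * p) / c ^+ 2 +
        (cmod (a * b - cR c ^+ 2 * p) / c ^+ 2 + cmod b ^+ 2 / c ^+ 2) - cmod p ^+ 2) =
        cmod a ^+ 2 + cmod b ^+ 2 - c ^+ 2 * cmod p ^+ 2 + 2 * cmod (a * b - cR c ^+ 2 * p).
        by field; rewrite lt0r_neq0.
      by rewrite mulr1.
    by rewrite ltr_pM2l.
  have hP1 : P < 1 by rewrite /P lt1_sq // cmod_ge0.
  have g11 : 0 <= h11 by rewrite addr_ge0 // sqr_ge0.
  have g22 : 0 <= h22 by rewrite addr_ge0 // sqr_ge0.
  have gr : 0 <= r := cmod_ge0 _.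
  have gP : 0 <= P := sqr_ge0 _.
  set e := (1 - (h11 + h22) + P) / (2 - (h11 + h22)).
  have e0 : 0 < e by rewrite /e divr_gt0 //; lra.
  apply: (@le_lt_trans _ _ (Num.sqrt (1 - e))).
    apply: opnorm_le => v hv.
    rewrite vnorm2E !mulmx2 B00 B01 B10 B11; apply: ler_wsqrtr.
    rewrite idA -/h11 -/h22.
    have hX := unit_entries hv.
    have hRe : Rp (cconj (v ord0 ord0) * (cconj al * w + cconj w * de) * v ord_max ord0)
        <= r * cmod (v ord0 ord0) * cmod (v ord_max ord0).
      by apply: le_trans (Rp_le _) _; rewrite !cmodM cmod_conj /r (mulrC (cmod (v ord0 ord0))).
    have := core_real g11 g22 gr (cmod_ge0 (v ord0 ord0)) (cmod_ge0 (v ord_max ord0)) hX hP hT hP1.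
    rewrite -/e; nra.
  have [hn|hn] := ltrP (1 - e) 0; first by rewrite ltr0_sqrtr.
  by rewrite -lt1_sq ?sqrtr_ge0 // sqr_sqrtr //; lra.
- by rewrite B00 /al mulrC divfK.
- by rewrite B11 /de mulrC divfK.
- by rewrite det2 B00 B11 B01 B10.
- apply/matrixP => i j; rewrite !mxE; have [->|ne] := eqVneq i j => //.
Qed.

Close Scope classical_set_scope.

Section Eqs.
Variables (R : realType) (c : R) (a b p : R[i]).
Hypothesis c0 : 0 < c.

Lemma E_sym : T2 c a b p <-> T2 c b a p.
Proof. by split; apply: T2_sym. Qed.

Lemma E_T5 : T2 c a b p <-> T5 c a b p.
Proof.
split; first exact: T2_T5.
by move=> h; apply: T3_T2 => //; apply: T4_T3 => //; apply: T5_T4.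
Qed.

Lemma E_T4 : T2 c a b p <-> T4 c a b p.
Proof.
split; first by move=> h; apply: T5_T4 => //; apply: T2_T5.
by move=> h; apply: T3_T2 => //; apply: T4_T3.
Qed.

Lemma E_T3 : T2 c a b p <-> T3 c a b p.
Proof.
split; last exact: T3_T2.
by move=> h; apply: T4_T3 => //; apply/E_T4.
Qed.

Lemma E_T7 : T2 c a b p <-> T7 c a b p.
Proof.
split.
  move=> h; apply: T5T5_T7 => //; first exact: T2_T5.
  by apply: T2_T5 => //; apply: T2_sym.
by move=> h; apply/E_T5; apply: T7_T5.
Qed.

Lemma E_T1 : T2 c a b p <-> T1 c a b p.
Proof.
split; first by move=> h; apply: T7_T1 => //; apply/E_T7.
by move=> h; apply/E_T7; apply: T1_T7.
Qed.

Lemma E_T6 : T2 c a b p <-> T6 c a b p.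
Proof.
split; last by move=> h; apply: T8_T2 => //; apply: T9_T8; apply: T6_T9.
move=> h; apply: T4_T6 => //; first exact/E_T4.
by apply: (@T7_p _ c a b) => //; apply/E_T7.
Qed.

Lemma E_T8 : T2 c a b p <-> T8 c a b p.
Proof.
split; last exact: T8_T2.
by move=> h; apply: T9_T8; apply: T6_T9 => //; apply/E_T6.
Qed.

Lemma E_T9 : T2 c a b p <-> T9 c a b p.
Proof.
split; last by move=> h; apply: T8_T2 => //; apply: T9_T8.
by move=> h; apply: T6_T9 => //; apply/E_T6.
Qed.

End Eqs.

Lemma beta_ok (R : realType) (c : R) (a b p : R[i]) : 0 < c -> T7 c a b p ->
  [/\ a = (a - cconj b * p) / cR (1 - cmod p ^+ 2)
          + cconj ((b - cconj a * p) / cR (1 - cmod p ^+ 2)) * p,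
      b = (b - cconj a * p) / cR (1 - cmod p ^+ 2)
          + cconj ((a - cconj b * p) / cR (1 - cmod p ^+ 2)) * p &
      cmod ((a - cconj b * p) / cR (1 - cmod p ^+ 2))
      + cmod ((b - cconj a * p) / cR (1 - cmod p ^+ 2)) < c].
Proof.
move=> c0 h; have hp := T7_p c0 h.
have g : 0 < 1 - cmod p ^+ 2 by rewrite subr_gt0 lt1_sq // cmod_ge0.
set G := 1 - cmod p ^+ 2 in g *.
have GE : cR G = 1 - cconj p * p by rewrite conj_p rmorphB rmorph1.
have Gn : cR G != 0 by rewrite cR_neq0 lt0r_neq0.
split.
- rewrite conj_divR conjD conjN conjM conjK.
  apply: (mulIf Gn); rewrite GE; field; by rewrite -GE.
- rewrite conj_divR conjD conjN conjM conjK.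
  apply: (mulIf Gn); rewrite GE; field; by rewrite -GE.
- rewrite !cmod_div cmodR ger0_norm ?ltW // -mulrDl ltr_pdivrMr //.
  by move: h; rewrite /T7 addrC.
Qed.

Lemma natC (R : realType) (k : nat) : (k%:R : R[i]) = cR (k%:R).
Proof. by rewrite rmorph_nat. Qed.

Lemma cbinE (R : realType) (n j : nat) : cbin R n j = cR (rbin R n j).
Proof. by rewrite /cbin /rbin natC. Qed.

Definition PHf (R : realType) (f : R[i] -> option R[i]) : \bar R :=
  if `[< exists2 z : R[i], cmod z < 1 & f z = None >] then +oo%E
  else ereal_sup [set (cmod (odflt 0 (f z)))%:E | z in [set z : R[i] | cmod z < 1]].

Lemma PhiHinf_eq (R : realType) (n j : nat) (y : nat -> R[i]) (q : R[i]) :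
  PhiHinf n j y q = PH (rbin R n j) (y j) (y (n - j)%N) q.
Proof.
have -> : PhiHinf n j y q = PHf (Phi n j y q) by [].
have -> : PH (rbin R n j) (y j) (y (n - j)%N) q = PHf (PhiT (rbin R n j) (y j) (y (n - j)%N) q) by [].
by congr PHf; apply: funext => z; rewrite /Phi /PhiT cbinE.
Qed.

Lemma PhiHinf_eq' (R : realType) (n j : nat) (y : nat -> R[i]) (q : R[i]) : (j <= n)%N ->
  PhiHinf n (n - j) y q = PH (rbin R n j) (y (n - j)%N) (y j) q.
Proof.
move=> hj.
have -> : PhiHinf n (n - j) y q = PHf (Phi n (n - j) y q) by [].
have -> : PH (rbin R n j) (y (n - j)%N) (y j) q = PHf (PhiT (rbin R n j) (y (n - j)%N) (y j) q) by [].
by congr PHf; apply: funext => z; rewrite /Phi /PhiT subKn // /cbin bin_sub // natC.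
Qed.

Lemma rbin_gt0 (R : realType) (n j : nat) : (j <= n)%N -> 0 < rbin R n j.
Proof. by move=> h; rewrite /rbin ltr0n bin_gt0. Qed.

Unset Implicit Arguments.

Theorem mainTheorem2 (R : realType) (n : nat) (y : nat -> R[i]) (q : R[i]) :
  (2 <= n)%N ->
  [<->
   (* (1) *)
   tildeG n y q;
   (* (2) *)
   (forall j : nat, (1 <= j <= n./2)%N ->
      forall z w : R[i], cmod z <= 1 -> cmod w <= 1 ->
      cbin R n j - y j * z - y (n - j)%N * w + cbin R n j * q * z * w != 0);
   (* (3) *)
   (forall j : nat, (1 <= j <= n./2)%N ->
      (PhiHinf n j y q < 1%:E)%E /\
      (y j * y (n - j)%N = cbin R n j ^+ 2 * q -> cmod (y (n - j)%N) < rbin R n j));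
   (* (3') *)
   (forall j : nat, (1 <= j <= n./2)%N ->
      (PhiHinf n (n - j) y q < 1%:E)%E /\
      (y j * y (n - j)%N = cbin R n j ^+ 2 * q -> cmod (y j) < rbin R n j));
   (* (4) *)
   (forall j : nat, (1 <= j <= n./2)%N ->
      rbin R n j * cmod (y j - cconj (y (n - j)%N) * q)
      + cmod (y j * y (n - j)%N - cbin R n j ^+ 2 * q)
      < rbin R n j ^+ 2 - cmod (y (n - j)%N) ^+ 2);
   (* (4') *)
   (forall j : nat, (1 <= j <= n./2)%N ->
      rbin R n j * cmod (y (n - j)%N - cconj (y j) * q)
      + cmod (y j * y (n - j)%N - cbin R n j ^+ 2 * q)
      < rbin R n j ^+ 2 - cmod (y j) ^+ 2);
   (* (5) *)
   (forall j : nat, (1 <= j <= n./2)%N ->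
      cmod (y j) ^+ 2 - cmod (y (n - j)%N) ^+ 2 + rbin R n j ^+ 2 * cmod q ^+ 2
      + 2 * rbin R n j * cmod (y (n - j)%N - cconj (y j) * q) < rbin R n j ^+ 2
      /\ cmod (y (n - j)%N) < rbin R n j);
   (* (5') *)
   (forall j : nat, (1 <= j <= n./2)%N ->
      cmod (y (n - j)%N) ^+ 2 - cmod (y j) ^+ 2 + rbin R n j ^+ 2 * cmod q ^+ 2
      + 2 * rbin R n j * cmod (y j - cconj (y (n - j)%N) * q) < rbin R n j ^+ 2
      /\ cmod (y j) < rbin R n j);
   (* (6) *)
   (cmod q < 1 /\
    forall j : nat, (1 <= j <= n./2)%N ->
      cmod (y j) ^+ 2 + cmod (y (n - j)%N) ^+ 2 - rbin R n j ^+ 2 * cmod q ^+ 2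
      + 2 * cmod (y j * y (n - j)%N - cbin R n j ^+ 2 * q) < rbin R n j ^+ 2);
   (* (7) *)
   (forall j : nat, (1 <= j <= n./2)%N ->
      cmod (y (n - j)%N - cconj (y j) * q) + cmod (y j - cconj (y (n - j)%N) * q)
      < rbin R n j * (1 - cmod q ^+ 2));
   (* (8) *)
   (exists B : nat -> 'M[R[i]]_2, forall j : nat, (1 <= j <= n./2)%N ->
      [/\ opnorm2 (B j) < 1,
          y j = cbin R n j * B j ord0 ord0,
          y (n - j)%N = cbin R n j * B j ord_max ord_max
        & \det (B j) = q]);
   (* (9) *)
   (exists B : nat -> 'M[R[i]]_2, forall j : nat, (1 <= j <= n./2)%N ->
      [/\ opnorm2 (B j) < 1,
          y j = cbin R n j * B j ord0 ord0,
          y (n - j)%N = cbin R n j * B j ord_max ord_max,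
          \det (B j) = q
        & (B j)^T = B j])
  ].
Proof.
move=> n2.
have rng : forall j, (1 <= j <= n./2)%N ->
    [/\ (j <= n)%N, (n - (n - j))%N = j, (1 <= j <= n.-1)%N & (1 <= n - j <= n.-1)%N].
  move=> j /andP[h1 h2]; rewrite geq_half_double -addnn in h2.
  split; lia.
have c0 : forall j, (1 <= j <= n./2)%N -> 0 < rbin R n j.
  by move=> j hj; have [h _ _ _] := rng j hj; exact: rbin_gt0.
set H := forall j, (1 <= j <= n./2)%N -> T2 (rbin R n j) (y j) (y (n - j)%N) q.
have e1 : (forall j : nat, (1 <= j <= n./2)%N ->
      forall z w : R[i], cmod z <= 1 -> cmod w <= 1 ->
      cbin R n j - y j * z - y (n - j)%N * w + cbin R n j * q * z * w != 0) <-> H.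
  split => h j hj; first by have := h j hj; rewrite cbinE.
  by rewrite cbinE; exact: h j hj.
have e2 : (forall j : nat, (1 <= j <= n./2)%N ->
      (PhiHinf n j y q < 1%:E)%E /\
      (y j * y (n - j)%N = cbin R n j ^+ 2 * q -> cmod (y (n - j)%N) < rbin R n j)) <-> H.
  split => h j hj.
    apply/(E_T3 (y j) (y (n - j)%N) q (c0 j hj)).
    by rewrite /T3 -PhiHinf_eq -cbinE; exact: h j hj.
  have := (E_T3 (y j) (y (n - j)%N) q (c0 j hj)).1 (h j hj).
  by rewrite /T3 -PhiHinf_eq -cbinE.
have e3 : (forall j : nat, (1 <= j <= n./2)%N ->
      (PhiHinf n (n - j) y q < 1%:E)%E /\
      (y j * y (n - j)%N = cbin R n j ^+ 2 * q -> cmod (y j) < rbin R n j)) <-> H.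
  split => h j hj; have [hjn _ _ _] := rng j hj.
    apply/E_sym.
    apply/(E_T3 (y (n - j)%N) (y j) q (c0 j hj)).
    rewrite /T3 -PhiHinf_eq' // -cbinE [y (n - j)%N * _]mulrC; exact: h j hj.
  have := (E_T3 (y (n - j)%N) (y j) q (c0 j hj)).1.
  move=> /(_ ((E_sym _ _ _ _).1 (h j hj))).
  by rewrite /T3 -PhiHinf_eq' // -cbinE [y (n - j)%N * _]mulrC.
have e4 : (forall j : nat, (1 <= j <= n./2)%N ->
      rbin R n j * cmod (y j - cconj (y (n - j)%N) * q)
      + cmod (y j * y (n - j)%N - cbin R n j ^+ 2 * q)
      < rbin R n j ^+ 2 - cmod (y (n - j)%N) ^+ 2) <-> H.
  split => h j hj.
    apply/(E_T4 (y j) (y (n - j)%N) q (c0 j hj)).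
    by rewrite /T4 -cbinE; exact: h j hj.
  have := (E_T4 (y j) (y (n - j)%N) q (c0 j hj)).1 (h j hj).
  by rewrite /T4 -cbinE.
have e5 : (forall j : nat, (1 <= j <= n./2)%N ->
      rbin R n j * cmod (y (n - j)%N - cconj (y j) * q)
      + cmod (y j * y (n - j)%N - cbin R n j ^+ 2 * q)
      < rbin R n j ^+ 2 - cmod (y j) ^+ 2) <-> H.
  split => h j hj.
    apply/E_sym.
    apply/(E_T4 (y (n - j)%N) (y j) q (c0 j hj)).
    by rewrite /T4 -cbinE [y (n - j)%N * _]mulrC; exact: h j hj.
  have := (E_T4 (y (n - j)%N) (y j) q (c0 j hj)).1 ((E_sym _ _ _ _).1 (h j hj)).
  by rewrite /T4 -cbinE [y (n - j)%N * _]mulrC.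
have e6 : (forall j : nat, (1 <= j <= n./2)%N ->
      cmod (y j) ^+ 2 - cmod (y (n - j)%N) ^+ 2 + rbin R n j ^+ 2 * cmod q ^+ 2
      + 2 * rbin R n j * cmod (y (n - j)%N - cconj (y j) * q) < rbin R n j ^+ 2
      /\ cmod (y (n - j)%N) < rbin R n j) <-> H.
  split => h j hj.
    by apply/(E_T5 (y j) (y (n - j)%N) q (c0 j hj)); exact: h j hj.
  exact: (E_T5 (y j) (y (n - j)%N) q (c0 j hj)).1 (h j hj).
have e7 : (forall j : nat, (1 <= j <= n./2)%N ->
      cmod (y (n - j)%N) ^+ 2 - cmod (y j) ^+ 2 + rbin R n j ^+ 2 * cmod q ^+ 2
      + 2 * rbin R n j * cmod (y j - cconj (y (n - j)%N) * q) < rbin R n j ^+ 2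
      /\ cmod (y j) < rbin R n j) <-> H.
  split => h j hj.
    apply/E_sym.
    by apply/(E_T5 (y (n - j)%N) (y j) q (c0 j hj)); exact: h j hj.
  exact: (E_T5 (y (n - j)%N) (y j) q (c0 j hj)).1 ((E_sym _ _ _ _).1 (h j hj)).
have j1 : (1 <= 1 <= n./2)%N by rewrite leqnn /= half_gt0.
have e8 : (cmod q < 1 /\
    forall j : nat, (1 <= j <= n./2)%N ->
      cmod (y j) ^+ 2 + cmod (y (n - j)%N) ^+ 2 - rbin R n j ^+ 2 * cmod q ^+ 2
      + 2 * cmod (y j * y (n - j)%N - cbin R n j ^+ 2 * q) < rbin R n j ^+ 2) <-> H.
  split => [[hq h] j hj|h].
    apply/(E_T6 (y j) (y (n - j)%N) q (c0 j hj)).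
    by split => //; rewrite -cbinE; exact: h j hj.
  split; first by have [] := (E_T6 (y 1%N) (y (n - 1)%N) q (c0 1%N j1)).1 (h 1%N j1).
  move=> j hj; have [_] := (E_T6 (y j) (y (n - j)%N) q (c0 j hj)).1 (h j hj).
  by rewrite -cbinE.
have e9 : (forall j : nat, (1 <= j <= n./2)%N ->
      cmod (y (n - j)%N - cconj (y j) * q) + cmod (y j - cconj (y (n - j)%N) * q)
      < rbin R n j * (1 - cmod q ^+ 2)) <-> H.
  split => h j hj.
    by apply/(E_T7 (y j) (y (n - j)%N) q (c0 j hj)); exact: h j hj.
  exact: (E_T7 (y j) (y (n - j)%N) q (c0 j hj)).1 (h j hj).
have e10 : (exists B : nat -> 'M[R[i]]_2, forall j : nat, (1 <= j <= n./2)%N ->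
      [/\ opnorm2 (B j) < 1,
          y j = cbin R n j * B j ord0 ord0,
          y (n - j)%N = cbin R n j * B j ord_max ord_max
        & \det (B j) = q]) <-> H.
  split => [[B hB] j hj|h].
    apply/(E_T8 (y j) (y (n - j)%N) q (c0 j hj)).
    by exists (B j); rewrite -!cbinE; exact: hB j hj.
  have : forall j, exists B : 'M[R[i]]_2, (1 <= j <= n./2)%N ->
      [/\ opnorm2 B < 1, y j = cbin R n j * B ord0 ord0,
          y (n - j)%N = cbin R n j * B ord_max ord_max & \det B = q].
    move=> j; have [hj|hj] := boolP (1 <= j <= n./2)%N; last by exists 0.
    have [B hB] := (E_T8 (y j) (y (n - j)%N) q (c0 j hj)).1 (h j hj).
    by exists B => _; rewrite cbinE.
  by case/choice => B hB; exists B.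
have e11 : (exists B : nat -> 'M[R[i]]_2, forall j : nat, (1 <= j <= n./2)%N ->
      [/\ opnorm2 (B j) < 1,
          y j = cbin R n j * B j ord0 ord0,
          y (n - j)%N = cbin R n j * B j ord_max ord_max,
          \det (B j) = q
        & (B j)^T = B j]) <-> H.
  split => [[B hB] j hj|h].
    apply/(E_T9 (y j) (y (n - j)%N) q (c0 j hj)).
    by exists (B j); rewrite -!cbinE; exact: hB j hj.
  have : forall j, exists B : 'M[R[i]]_2, (1 <= j <= n./2)%N ->
      [/\ opnorm2 B < 1, y j = cbin R n j * B ord0 ord0,
          y (n - j)%N = cbin R n j * B ord_max ord_max, \det B = q & B^T = B].
    move=> j; have [hj|hj] := boolP (1 <= j <= n./2)%N; last by exists 0.
    have [B hB] := (E_T9 (y j) (y (n - j)%N) q (c0 j hj)).1 (h j hj).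
    by exists B => _; rewrite cbinE.
  by case/choice => B hB; exists B.
have e0 : tildeG n y q <-> H.
  split => [[hq [be hbe]] j hj|h].
    have [hjn hnn hj1 hj2] := rng j hj.
    apply/(E_T1 (y j) (y (n - j)%N) q (c0 j hj)); split => //.
    have [h1 h2] := hbe j hj1; have [h3 _] := hbe (n - j)%N hj2.
    rewrite hnn in h3.
    by exists (be j), (be (n - j)%N); split.
  have hq : cmod q < 1.
    by apply: (T7_p (c0 1%N j1)); apply/(E_T7 _ _ _ (c0 1%N j1)); exact: h 1%N j1.
  split => //.
  exists (fun j => (y j - cconj (y (n - j)%N) * q) / cR (1 - cmod q ^+ 2)).
  move=> j /andP[j1' j2'].
  have [hj|hj] := leqP j n./2.
    have hr : (1 <= j <= n./2)%N by rewrite j1' hj.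
    have [hjn hnn _ _] := rng j hr.
    have T7j := (E_T7 _ _ _ (c0 j hr)).1 (h j hr).
    have [f1 f2 f3] := beta_ok (c0 j hr) T7j.
    by rewrite /= hnn; split.
  have hk : (1 <= n - j <= n./2)%N.
    move: hj; rewrite ltn_half_double geq_half_double -!addnn => hj.
    apply/andP; split; lia.
  have hnj : (n - (n - j))%N = j by lia.
  have T7k := (E_T7 _ _ _ (c0 _ hk)).1 (h _ hk).
  rewrite hnj in T7k.
  have T7k' : T7 (rbin R n (n - j)) (y j) (y (n - j)%N) q by rewrite /T7 addrC.
  have [f1 f2 f3] := beta_ok (c0 _ hk) T7k'.
  rewrite /= hnj; split => //.
  by move: f3; rewrite /rbin bin_sub //; lia.
tfae.
- by move=> /e0 /e1.
- by move=> /e1 /e2.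
- by move=> /e2 /e3.
- by move=> /e3 /e4.
- by move=> /e4 /e5.
- by move=> /e5 /e6.
- by move=> /e6 /e7.
- by move=> /e7 /e8.
- by move=> /e8 /e9.
- by move=> /e9 /e10.
- by move=> /e10 /e11.
- by move=> /e11 /e0.
Qed.
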